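(* A family $\mathcal{F}\subseteq 2^{[n]}$ is s-extremal if and only if there exists a Sperner family $\mathcal{S}\subseteq 2^{[n]}$ such that $\mathcal{F}$ is $\mathcal{S}$-extremal.
   Context: $[n]=\{1,\dots,n\}$. A Sperner family is a family of sets none of which is contained in another. $\mathcal{F}$ shatters $S$ if $\{F\cap S:F\in\mathcal{F}\}=2^S$; $\mathrm{Sh}(\mathcal{F})$ is the family of shattered sets; $\mathcal{F}$ is s-extremal if $|\mathrm{Sh}(\mathcal{F})|=|\mathcal{F}|$. $\mathcal{H}(\mathcal{S})=\{F\subseteq[n]: \text{no } S\in\mathcal{S} \text{ satisfies } S\subseteq F\}$. For a Sperner family $\mathcal{S}$, a family $\mathcal{F}\subseteq 2^{[n]}$ is called $\mathcal{S}$-extremal if $\mathcal{F}$ shatters no element of $\mathcal{S}$ and $|\mathcal{F}|=|\mathcal{H}(\mathcal{S})|$. *)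

(* Defs.v *)
From mathcomp Require Import all_boot.
Set Implicit Arguments. Unset Strict Implicit. Unset Printing Implicit Defensive.

Definition sperner n (S : {set {set 'I_n}}) : bool :=
  [forall A in S, forall B in S, (A \subset B) ==> (A == B)].

Definition shatters n (F : {set {set 'I_n}}) (S : {set 'I_n}) : bool :=
  [set G :&: S | G in F] == powerset S.

Definition Sh n (F : {set {set 'I_n}}) : {set {set 'I_n}} :=
  [set S | shatters F S].

Definition s_extremal n (F : {set {set 'I_n}}) : bool := #|Sh F| == #|F|.

Definition Hfam n (S : {set {set 'I_n}}) : {set {set 'I_n}} :=
  [set G : {set 'I_n} | [forall A in S, ~~ (A \subset G)]].

Definition S_extremal n (S F : {set {set 'I_n}}) : bool :=
  [forall A in S, ~~ shatters F A] && (#|F| == #|Hfam S|).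

(* Main.v *)
Require Import Defs.
From mathcomp Require Import all_boot.
Set Implicit Arguments. Unset Strict Implicit. Unset Printing Implicit Defensive.

Section Aux.
Variable n : nat.
Implicit Types (F : {set {set 'I_n}}) (S T U G : {set 'I_n}).

Lemma shattersP F S :
  reflect (forall U, U \subset S -> exists2 G, G \in F & G :&: S = U) (shatters F S).
Proof.
rewrite /shatters eqEsubset.
have -> : [set G :&: S | G in F] \subset powerset S.
  by apply/subsetP => _ /imsetP[G _ ->]; rewrite inE subsetIr.
apply: (iffP idP) => /=.
- move/subsetP => H U US.
  have : U \in powerset S by rewrite inE.
  by move/H/imsetP=> [G GF ->]; exists G.
- move=> H; apply/subsetP => U; rewrite inE => /H [G GF <-].
  by apply/imsetP; exists G.
Qed.

Lemma shatters_sub F S T : shatters F S -> T \subset S -> shatters F T.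
Proof.
move/shattersP => H TS; apply/shattersP => U UT.
have [G GF GS] := H U (subset_trans UT TS).
exists G => //.
have -> : G :&: T = (G :&: S) :&: T by rewrite -setIA (setIidPr TS).
by rewrite GS; apply/setIidPl.
Qed.

Lemma shatters_mono F F' S : F' \subset F -> shatters F' S -> shatters F S.
Proof.
move=> FF /shattersP H; apply/shattersP => U US.
have [G GF GS] := H U US; exists G => //; exact: (subsetP FF).
Qed.

Lemma pajor F : #|F| <= #|Sh F|.
Proof.
have [m leFm] := ubnP #|F|; elim: m => // m IH in F leFm *.
case: (leqP #|F| 1) => hF.
  case: (posnP #|F|) => [->//|/card_gt0P [G GF]].
  apply: leq_trans hF _; apply/card_gt0P; exists set0; rewrite inE.
  apply/shattersP => U; rewrite subset0 => /eqP ->; exists G => //; exact: setI0.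
have [G1 [G2 [G1F G2F G12]]] := card_gt1P hF.
have [x Hx] : exists x, (x \in G1) != (x \in G2).
  case: (boolP [exists x, (x \in G1) != (x \in G2)]) => [/existsP//|/existsPn H].
  case/eqP: G12; apply/setP => x; apply/eqP; move: (H x); by rewrite negbK.
set B := [set G : {set 'I_n} | x \in G].
set F1 := F :&: B; set F0 := F :\: B.
have hsum : #|F1| + #|F0| = #|F| by rewrite cardsID.
have F1p : 0 < #|F1|.
  apply/card_gt0P; case: (boolP (x \in G1)) => h.
    by exists G1; rewrite !inE G1F h.
  by exists G2; rewrite !inE G2F; move: Hx; rewrite (negbTE h); case: (x \in G2).
have F0p : 0 < #|F0|.
  apply/card_gt0P; case: (boolP (x \in G1)) => h.
    by exists G2; rewrite !inE G2F andbT; move: Hx; rewrite h; case: (x \in G2).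
  by exists G1; rewrite !inE G1F h.
have IH1 : #|F1| <= #|Sh F1| by apply: IH; rewrite -ltnS; apply: leq_trans leFm; rewrite ltnS -hsum -addn1 leq_add2l.
have IH0 : #|F0| <= #|Sh F0| by apply: IH; rewrite -ltnS; apply: leq_trans leFm; rewrite ltnS -hsum -add1n leq_add2r.
have nx0 : forall S, S \in Sh F0 -> x \notin S.
  move=> S; rewrite inE => /shattersP H; apply/negP => xS.
  have : [set x] \subset S by rewrite sub1set.
  move/H=> [G].
  by rewrite !inE => /andP[/negP nG _] /setP/(_ x); rewrite !inE eqxx xS andbT => /nG.
have nx1 : forall S, S \in Sh F1 -> x \notin S.
  move=> S; rewrite inE => /shattersP H; apply/negP => xS.
  have [G] := H set0 (sub0set _).
  by rewrite !inE => /andP[_ xG] /setP/(_ x); rewrite !inE xG xS.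
have sub0 : Sh F0 \subset Sh F.
  by apply/subsetP => S; rewrite !inE; apply: shatters_mono; apply: subsetDl.
have sub1 : Sh F1 \subset Sh F.
  by apply/subsetP => S; rewrite !inE; apply: shatters_mono; apply: subsetIl.
set I := Sh F0 :&: Sh F1.
set J := [set x |: S | S in I].
have cJ : #|J| = #|I|.
  apply: card_in_imset => S S' SI S'I eqS.
  have nS : x \notin S by apply: nx0; move: SI; rewrite inE => /andP[].
  have nS' : x \notin S' by apply: nx0; move: S'I; rewrite inE => /andP[].
  by rewrite -(setU1K nS) -(setU1K nS') eqS.
have subJ : J \subset Sh F.
  apply/subsetP => _ /imsetP[S SI ->]; move: SI; rewrite !inE => /andP[].
  move=> /[dup] S0 /shattersP H0 /shattersP H1.
  have nS : x \notin S by apply: nx0; rewrite inE.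
  apply/shattersP => U US.
  case: (boolP (x \in U)) => xU.
    have /H1 [G GF GS] : U :\ x \subset S.
      by apply/subsetP => y; rewrite !inE => /andP[ny /(subsetP US)]; rewrite !inE (negbTE ny).
    exists G; first by move: GF; rewrite !inE => /andP[].
    move: GF; rewrite !inE => /andP[_ xG].
    apply/setP => y; rewrite !inE; case: (eqVneq y x) => [->|ny]; first by rewrite xG xU.
    by move/setP: GS => /(_ y); rewrite !inE ny.
  have /H0 [G GF GS] : U \subset S.
    by apply/subsetP => y yU; move: (subsetP US y yU); rewrite !inE; case: eqP => // eyx; by rewrite -eyx yU in xU.
  exists G; first by move: GF; rewrite !inE => /andP[].
  move: GF; rewrite !inE => /andP[xG _].
  apply/setP => y; rewrite !inE; case: (eqVneq y x) => [->|ny].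
    by rewrite (negbTE xG) (negbTE xU).
  by move/setP: GS => /(_ y); rewrite !inE.
have disj : (Sh F0 :|: Sh F1) :&: J = set0.
  apply/setP => S; rewrite in_set0 in_setI in_setU; apply/negP => /andP[/orP H /imsetP[S' _ eS]].
  have : x \notin S by case: H; [apply: nx0|apply: nx1].
  by rewrite eS setU11.
have : #|(Sh F0 :|: Sh F1) :|: J| <= #|Sh F|.
  by apply: subset_leq_card; rewrite subUset subJ subUset sub0 sub1.
move: (cardsUI (Sh F0 :|: Sh F1) J); rewrite disj cards0 addn0 => ->.
rewrite cJ /I cardsUI -hsum => H; apply: leq_trans H.
by rewrite addnC leq_add.
Qed.

End Aux.

Theorem proposition13 (n : nat) (F : {set {set 'I_n}}) :
  s_extremal F <-> exists S : {set {set 'I_n}}, sperner S /\ S_extremal S F.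
Proof.
split.
- move/eqP => hF.
  exists [set A | ~~ shatters F A && [forall B : {set 'I_n}, (B \proper A) ==> shatters F B]].
  split.
    apply/forallP => A; apply/implyP; rewrite inE => /andP[nA _].
    apply/forallP => B; apply/implyP; rewrite inE => /andP[_ /forallP HB].
    apply/implyP => AB; apply/negPn/negP => nAB.
    have : A \proper B by rewrite properEneq nAB AB.
    by move/(implyP (HB A)); rewrite (negbTE nA).
  apply/andP; split.
    by apply/forallP => A; apply/implyP; rewrite inE => /andP[].
  rewrite -hF; apply/eqP/eq_card => G; rewrite !inE.
  case: (boolP (shatters F G)) => sG.
    apply/esym/forallP => A; apply/implyP; rewrite inE => /andP[nA _].
    by apply/negP => AG; move: nA; rewrite (shatters_sub sG AG).
  apply/esym/negbTE/negP => /forallP H.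
  case: (@arg_minnP _ G (fun A => (A \subset G) && ~~ shatters F A) (fun A => #|A|)).
    by rewrite subxx.
  move=> A /andP[AG nA] Amin.
  move: (H A); rewrite inE nA AG /= implybF => /negP; apply.
  apply/forallP => B; apply/implyP => BA.
  apply/negPn/negP => nB.
  have := Amin B; rewrite (subset_trans (proper_sub BA) AG) nB => /(_ isT).
  by rewrite leqNgt proper_card.
- move=> [S [_ /andP[/forallP hS /eqP hF]]].
  apply/eqP/eqP; rewrite eqn_leq pajor andbT hF.
  apply: subset_leq_card; apply/subsetP => G; rewrite !inE => sG.
  apply/forallP => A; apply/implyP => AS; apply/negP => AG.
  by move: (implyP (hS A) AS); rewrite (shatters_sub sG AG).
Qed.
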